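(* Let $\varepsilon,\delta\in(0,1)$ and $\alpha\ge1$. There is a one-pass streaming algorithm that, on any strict turnstile stream on $[n]$ with frequency vector $f$ satisfying the $L_1$ $\alpha$-property, outputs a $(1\pm\varepsilon)$-approximation of $\|f\|_1$ with probability at least $1-\delta$, using $O(\log(\alpha/\varepsilon)+\log(1/\delta)+\log\log n)$ bits of space.
   Context: A data stream on universe $[n]$ is a sequence of $m$ updates $(i_t,\Delta_t)\in[n]\times\{-M,\dots,M\}$; the frequency vector $f\in\mathbb{R}^n$ starts at $0$ and update $(i_t,\Delta_t)$ adds $\Delta_t$ to $f_{i_t}$. It is assumed that $\log(mM)=O(\log n)$. A strict turnstile stream is one in which updates may be negative but every coordinate of the frequency vector is non-negative at all times. The insertion vector $I$ is the frequency vector of the substream of positive updates and the deletion vector $D$ is the entrywise absolute value of the frequency vector of the substream of negative updates, so $f=I-D$. The stream has the $L_1$ $\alpha$-property if $\|I+D\|_1\le\alpha\|f\|_1$. Space is measured in bits. *)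

(* Defs.v *)
From Stdlib Require Import Reals.
From mathcomp Require Import all_boot all_order all_algebra.
From mathcomp Require Import Rstruct.
Set Implicit Arguments. Unset Strict Implicit. Unset Printing Implicit Defensive.
Import Order.TTheory GRing.Theory Num.Theory.
Local Open Scope ring_scope.

Definition update (n : nat) := ('I_n * int)%type.

Definition freq n (s : seq (update n)) (i : 'I_n) : int :=
  \sum_(u <- s | u.1 == i) u.2.

Definition insv n (s : seq (update n)) (i : 'I_n) : int :=
  \sum_(u <- s | (u.1 == i) && (0 < u.2)) u.2.

Definition delv n (s : seq (update n)) (i : 'I_n) : int :=
  `| \sum_(u <- s | (u.1 == i) && (u.2 < 0)) u.2 |.

Definition l1norm n (v : 'I_n -> int) : R := \sum_(i < n) (`|v i|)%:~R.

Definition strict_turnstile n (s : seq (update n)) : Prop :=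
  forall k (i : 'I_n), 0 <= freq (take k s) i.

Definition L1_alpha_property n (alpha : R) (s : seq (update n)) : Prop :=
  l1norm (fun i => insv s i + delv s i) <= alpha * l1norm (freq s).

(* A one-pass randomized streaming algorithm on universe [n] with k memory
   states (i.e. log2 k bits of space): a random initial state, a randomized
   transition on each update (fresh coins at each step; any randomness to be
   reused must be stored in the state), and an output function. *)
Record stream_alg (n k : nat) := StreamAlg {
  sa_init : 'I_k -> R;
  sa_step : update n -> 'I_k -> 'I_k -> R;   (* sa_step u s s' = P(s -> s' on u) *)
  sa_out  : 'I_k -> R
}.

Definition is_distr k (d : 'I_k -> R) : Prop :=
  (forall s, 0 <= d s) /\ \sum_(s < k) d s = 1.

Definition valid_alg n k (A : stream_alg n k) : Prop :=
  is_distr (sa_init A) /\ forall u s, is_distr (sa_step A u s).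

Definition run_distr n k (A : stream_alg n k) (s : seq (update n)) : 'I_k -> R :=
  foldl (fun (d : 'I_k -> R) u => fun t => \sum_(r < k) d r * sa_step A u r t)
        (sa_init A) s.

Definition success_prob n k (A : stream_alg n k) (eps : R) (s : seq (update n)) : R :=
  let L := l1norm (freq s) in
  \sum_(t < k | ((1 - eps) * L <= sa_out A t) && (sa_out A t <= (1 + eps) * L))
     run_distr A s t.

Definition log2 (x : R) : R := ln x / ln 2.

(* Main.v *)
Require Import Defs.
From Stdlib Require Import Reals FunctionalExtensionality.
From mathcomp Require Import all_boot all_order all_algebra.
From mathcomp Require Import Rstruct.
From mathcomp Require Import ring lra zify.
Set Implicit Arguments. Unset Strict Implicit. Unset Printing Implicit Defensive.
Import Order.TTheory GRing.Theory Num.Theory.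
Local Open Scope ring_scope.

Definition stepk (S : finType) (W : S -> S -> R) (d : S -> R) : S -> R :=
  fun t => \sum_r d r * W r t.
Definition Ex (S : finType) (d : S -> R) (f : S -> R) : R := \sum_t d t * f t.
Definition kvalid (S : finType) (W : S -> S -> R) :=
  forall r, (forall t, 0 <= W r t) /\ \sum_t W r t = 1.
Definition dvalid (S : finType) (d : S -> R) :=
  (forall t, 0 <= d t) /\ \sum_t d t = 1.

Lemma Ex_step (S : finType) (W : S -> S -> R) d f :
  Ex (stepk W d) f = \sum_r d r * (\sum_t W r t * f t).
Proof.
rewrite /Ex /stepk.
under eq_bigr do rewrite mulr_suml.
rewrite exchange_big /=; apply: eq_bigr => r _.
rewrite mulr_sumr; apply: eq_bigr => t _; by rewrite mulrA.
Qed.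

Lemma Ex_le (S : finType) (W : S -> S -> R) d f g :
  (forall r, \sum_t W r t * f t <= g r) -> (forall t, 0 <= d t) ->
  Ex (stepk W d) f <= Ex d g.
Proof.
move=> H Hd; rewrite Ex_step /Ex; apply: ler_sum => r _.
by apply: ler_wpM2l.
Qed.

Lemma dvalid_step (S : finType) (W : S -> S -> R) d :
  kvalid W -> dvalid d -> dvalid (stepk W d).
Proof.
move=> HW [Hd0 Hd1]; split.
  move=> t; apply: sumr_ge0 => r _; apply: mulr_ge0 => //; by case: (HW r).
have := Ex_step W d (fun _ => 1).
rewrite /Ex. under eq_bigr do rewrite mulr1.
move=> ->. rewrite -[RHS]Hd1; apply: eq_bigr => r _.
under eq_bigr do rewrite mulr1. by case: (HW r) => _ ->; rewrite mulr1.
Qed.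

Fixpoint Pow (S : finType) (W : S -> S -> R) (n : nat) : S -> S -> R :=
  match n with
  | 0 => fun r t => (r == t)%:R
  | n.+1 => fun r t => \sum_s Pow W n r s * W s t
  end.

Lemma kvalid_Pow (S : finType) (W : S -> S -> R) n : kvalid W -> kvalid (Pow W n).
Proof.
move=> HW; elim: n => [|n IH] r /=.
  split; first by move=> t; rewrite ler0n.
  rewrite (bigD1 r) //= eqxx big1 ?addr0 // => t /negPf; rewrite eq_sym => ->; done.
have := dvalid_step HW (IH r). by rewrite /stepk.
Qed.

Lemma step_Pow (S : finType) (W : S -> S -> R) n d :
  stepk (Pow W n) d = iter n (stepk W) d.
Proof.
elim: n => [|n IH] /=.
  apply: functional_extensionality => t; rewrite /stepk.
  rewrite (bigD1 t) //= eqxx mulr1 big1 ?addr0 // => r /negPf ->; by rewrite mulr0.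
rewrite -IH; apply: functional_extensionality => t; rewrite /stepk.
under eq_bigr do rewrite mulr_sumr.
rewrite exchange_big /=; apply: eq_bigr => s _.
rewrite mulr_suml; apply: eq_bigr => r _; by rewrite mulrA.
Qed.

Definition ee (a : R) (c : nat) := ((1 + a) ^+ c - 1) / a.
Definition qq (a : R) (c : nat) := ((1 + a) ^+ c)^-1.
Definition mor (a : R) (cap : nat) (c t : 'I_cap.+1) :=
  if (c < cap)%N then
    (if val t == c.+1 then qq a c else if t == c then 1 - qq a c else 0)
  else (t == c)%:R.
Arguments mor a cap c t : clear implicits.

Lemma mor_sum (a : R) cap (c : 'I_cap.+1) (f : 'I_cap.+1 -> R) :
  \sum_t mor a cap c t * f t =
  if (c < cap)%N then qq a c * f (inord c.+1) + (1 - qq a c) * f c else f c.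
Proof.
rewrite /mor; case: ifP => Hc.
  have Hi : nat_of_ord (inord c.+1 : 'I_cap.+1) = c.+1 by rewrite inordK.
  have Hne : (c != inord c.+1 :> 'I_cap.+1).
    by apply/negP => /eqP /(congr1 (@nat_of_ord _)); rewrite Hi => /n_Sn.
  rewrite (bigD1 (inord c.+1)) //= Hi eqxx (bigD1 c) //= ?Hne //=.
  rewrite (ltn_eqF (ltnSn c)).
  rewrite eqxx big1 ?addr0 //.
  move=> t /andP [Ht1 Ht2]; rewrite (negPf Ht2) ifN ?mul0r //.
  apply: contra Ht1 => /eqP Ht; apply/eqP/val_inj => /=; by rewrite Ht Hi.
rewrite (bigD1 c) //= eqxx mul1r big1 ?addr0 // => t /negPf ->; by rewrite mul0r.
Qed.

Lemma ee_ge0 (a : R) c : 0 < a -> 0 <= ee a c.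
Proof.
move=> Ha; have H1 : 1 <= (1 + a) ^+ c.
  apply: exprn_ege1; lra.
rewrite /ee; apply: divr_ge0; lra.
Qed.

Lemma qq_bounds (a : R) c : 0 < a -> 0 < qq a c /\ qq a c <= 1.
Proof.
move=> Ha; have H1 : 1 <= (1 + a) ^+ c.
  apply: exprn_ege1; lra.
rewrite /qq; split; first by rewrite invr_gt0; lra.
have Hp : 0 < (1 + a) ^+ c by lra.
by rewrite invf_le1.

Qed.

Lemma mor_valid (a : R) cap : 0 < a -> kvalid (mor a cap).
Proof.
move=> Ha r; have [Hq0 Hq1] := qq_bounds r Ha; split.
  move=> t; rewrite /mor; case: ifP => _; last by rewrite ler0n.
  case: ifP => _; first lra. case: ifP => _; lra.
have := mor_sum a r (fun _ => 1). under eq_bigr do rewrite mulr1.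
move=> ->; case: ifP => _; lra.
Qed.

Lemma ee_S (a : R) c : 0 < a -> ee a c.+1 = ee a c + (1 + a) ^+ c.
Proof. move=> Ha; rewrite /ee exprSr; field; apply/eqP => H; lra. Qed.

Lemma mor_mean (a : R) cap (c : 'I_cap.+1) : 0 < a ->
  \sum_t mor a cap c t * ee a t <= ee a c + 1.
Proof.
move=> Ha; rewrite mor_sum; case: ifP => Hc; last lra.
rewrite inordK // ee_S // /qq.
have Hu : (1 + a) ^+ c != 0 by rewrite expf_neq0 //; apply/eqP => H; lra.
set u := (1 + a) ^+ c in Hu *.
have -> : u^-1 * (ee a c + u) + (1 - u^-1) * ee a c = ee a c + 1 by field.
lra.
Qed.

Lemma mor_var (a : R) cap (c : 'I_cap.+1) (x : R) : 0 < a -> x + 1 <= ee a cap ->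
  \sum_t mor a cap c t * (ee a t - (x + 1)) ^+ 2 <= (ee a c - x) ^+ 2 + a * ee a c.
Proof.
move=> Ha Hcap; rewrite mor_sum; case: ifP => Hc; last first.
  have -> : nat_of_ord c = cap.
    by apply/eqP; rewrite eqn_leq -ltnS ltn_ord leqNgt Hc.
  have := ee_ge0 cap Ha; nra.
rewrite inordK // ee_S // /qq.
have Hu : (1 + a) ^+ c != 0 by rewrite expf_neq0 //; apply/eqP => H; lra.
have Ha0 : a != 0 by apply/eqP => H; lra.
have He : a * ee a c = (1 + a) ^+ c - 1 by rewrite /ee; field.
set u := (1 + a) ^+ c in Hu He *.
rewrite He.
have -> : u^-1 * (ee a c + u - (x + 1)) ^+ 2 + (1 - u^-1) * (ee a c - (x + 1)) ^+ 2
  = (ee a c - x) ^+ 2 + u - 1 by field.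
lra.
Qed.

Definition St (cap : nat) := ('I_cap.+1 * 'I_cap.+1)%type.

Definition WP (a : R) (cap : nat) (r t : St cap) :=
  mor a cap r.1 t.1 * (t.2 == r.2)%:R.
Definition WN (a : R) (cap : nat) (r t : St cap) :=
  mor a cap r.2 t.2 * (t.1 == r.1)%:R.

Lemma WP_sum (a : R) cap (r : St cap) (F : St cap -> R) :
  \sum_t WP a r t * F t = \sum_t1 mor a cap r.1 t1 * F (t1, r.2).
Proof.
transitivity (\sum_t1 \sum_t2 WP a r (t1, t2) * F (t1, t2)).
  by rewrite pair_bigA; apply: eq_bigr => -[i j].
apply: eq_bigr => t1 _; rewrite (bigD1 r.2) //= /WP /= eqxx mulr1 big1 ?addr0 //.
by move=> t2 /negPf ->; rewrite mulr0 mul0r.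
Qed.

Lemma WN_sum (a : R) cap (r : St cap) (F : St cap -> R) :
  \sum_t WN a r t * F t = \sum_t2 mor a cap r.2 t2 * F (r.1, t2).
Proof.
transitivity (\sum_t1 \sum_t2 WN a r (t1, t2) * F (t1, t2)).
  by rewrite pair_bigA; apply: eq_bigr => -[i j].
rewrite exchange_big /=.
apply: eq_bigr => t2 _; rewrite (bigD1 r.1) //= /WN /= eqxx mulr1 big1 ?addr0 //.
by move=> t1 /negPf ->; rewrite mulr0 mul0r.
Qed.

Lemma mor_const (a : R) cap (c : 'I_cap.+1) (k : R) : 0 < a ->
  \sum_t mor a cap c t * k = k.
Proof.
move=> Ha; rewrite -mulr_suml; have [_ ->] := @mor_valid a cap Ha c; by rewrite mul1r.
Qed.

Lemma WP_valid (a : R) cap : 0 < a -> kvalid (@WP a cap).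
Proof.
move=> Ha r; split.
  move=> t; rewrite /WP; apply: mulr_ge0; last by rewrite ler0n.
  by have [H _] := @mor_valid a cap Ha r.1.
have := WP_sum a r (fun _ => 1); under eq_bigr do rewrite mulr1.
move=> ->; exact: mor_const.
Qed.

Lemma WN_valid (a : R) cap : 0 < a -> kvalid (@WN a cap).
Proof.
move=> Ha r; split.
  move=> t; rewrite /WN; apply: mulr_ge0; last by rewrite ler0n.
  by have [H _] := @mor_valid a cap Ha r.2.
have := WN_sum a r (fun _ => 1); under eq_bigr do rewrite mulr1.
move=> ->; exact: mor_const.
Qed.

Lemma ExD (S : finType) (d f g : S -> R) :
  Ex d (fun t => f t + g t) = Ex d f + Ex d g.
Proof. rewrite /Ex -big_split /=; apply: eq_bigr => t _; by rewrite mulrDr. Qed.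

Lemma ExZ (S : finType) (d f : S -> R) (c : R) :
  Ex d (fun t => c * f t) = c * Ex d f.
Proof. rewrite /Ex mulr_sumr; apply: eq_bigr => t _; by rewrite mulrCA. Qed.

Lemma ExC (S : finType) (d : S -> R) (c : R) : dvalid d ->
  Ex d (fun _ => c) = c.
Proof. case=> _ H1; by rewrite /Ex -mulr_suml H1 mul1r. Qed.

Definition eP (a : R) cap (t : St cap) := ee a t.1.
Definition eN (a : R) cap (t : St cap) := ee a t.2.

Definition Inv (a : R) cap (d : St cap -> R) (x y : nat) :=
  [/\ dvalid d, Ex d (@eP a cap) <= x%:R,
      Ex d (fun t => (eP a t - x%:R) ^+ 2) <= a * x%:R ^+ 2,
      Ex d (@eN a cap) <= y%:R &
      Ex d (fun t => (eN a t - y%:R) ^+ 2) <= a * y%:R ^+ 2].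

Lemma WP_snd (a : R) cap (d : St cap -> R) (G : 'I_cap.+1 -> R) : 0 < a ->
  Ex (stepk (@WP a cap) d) (fun t => G t.2) = Ex d (fun t => G t.2).
Proof.
move=> Ha; rewrite Ex_step /Ex; apply: eq_bigr => r _; rewrite WP_sum /=.
by rewrite mor_const.
Qed.

Lemma WN_fst (a : R) cap (d : St cap -> R) (G : 'I_cap.+1 -> R) : 0 < a ->
  Ex (stepk (@WN a cap) d) (fun t => G t.1) = Ex d (fun t => G t.1).
Proof.
move=> Ha; rewrite Ex_step /Ex; apply: eq_bigr => r _; rewrite WN_sum /=.
by rewrite mor_const.
Qed.

Lemma Inv_stepP (a : R) cap d x y : 0 < a -> Inv a d x y ->
  x.+1%:R <= ee a cap -> Inv a (stepk (@WP a cap) d) x.+1 y.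
Proof.
move=> Ha [Hd Hm Hv HmN HvN] Hcap.
have Hd0 := Hd.1.
have HS : x.+1%:R = x%:R + 1 :> R by rewrite -addn1 natrD.
have Hx0 : 0 <= x%:R :> R by rewrite ler0n.
split.
- exact: dvalid_step (@WP_valid a cap Ha) Hd.
- apply: le_trans (Ex_le (g := fun r => eP a r + 1) _ Hd0) _.
    move=> r; rewrite WP_sum /eP /=; exact: mor_mean.
  rewrite ExD ExC // HS; lra.
- apply: le_trans (Ex_le (g := fun r => (eP a r - x%:R) ^+ 2 + a * eP a r) _ Hd0) _.
    move=> r; rewrite WP_sum /eP /= HS; apply: mor_var => //; rewrite -HS //.
  rewrite ExD ExZ HS.
  have : a * Ex d (@eP a cap) <= a * x%:R by rewrite ler_pM2l.
  nra.
- by rewrite (WP_snd d (fun t => ee a t)).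
- by rewrite (WP_snd d (fun t => (ee a t - y%:R) ^+ 2)).
Qed.

Lemma Inv_stepN (a : R) cap d x y : 0 < a -> Inv a d x y ->
  y.+1%:R <= ee a cap -> Inv a (stepk (@WN a cap) d) x y.+1.
Proof.
move=> Ha [Hd Hm Hv HmN HvN] Hcap.
have Hd0 := Hd.1.
have HS : y.+1%:R = y%:R + 1 :> R by rewrite -addn1 natrD.
have Hx0 : 0 <= y%:R :> R by rewrite ler0n.
split.
- exact: dvalid_step (@WN_valid a cap Ha) Hd.
- by rewrite (WN_fst d (fun t => ee a t)).
- by rewrite (WN_fst d (fun t => (ee a t - x%:R) ^+ 2)).
- apply: le_trans (Ex_le (g := fun r => eN a r + 1) _ Hd0) _.
    move=> r; rewrite WN_sum /eN /=; exact: mor_mean.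
  rewrite ExD ExC // HS; lra.
- apply: le_trans (Ex_le (g := fun r => (eN a r - y%:R) ^+ 2 + a * eN a r) _ Hd0) _.
    move=> r; rewrite WN_sum /eN /= HS; apply: mor_var => //; rewrite -HS //.
  rewrite ExD ExZ HS.
  have : a * Ex d (@eN a cap) <= a * y%:R by rewrite ler_pM2l.
  nra.
Qed.

Definition Kern (a : R) cap n0 (u : update n0) : St cap -> St cap -> R :=
  if (0 < u.2) then Pow (@WP a cap) `|u.2|%N else Pow (@WN a cap) `|u.2|%N.
Definition posu n0 (u : update n0) : nat := if (0 < u.2) then `|u.2|%N else 0%N.
Definition negu n0 (u : update n0) : nat := if (0 < u.2) then 0%N else `|u.2|%N.
Definition Ptot n0 (s : seq (update n0)) : nat := \sum_(u <- s) posu u.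
Definition Ntot n0 (s : seq (update n0)) : nat := \sum_(u <- s) negu u.
Definition runS (a : R) cap n0 (d : St cap -> R) (s : seq (update n0)) :=
  foldl (fun d u => stepk (@Kern a cap _ u) d) d s.
Arguments runS a cap {n0} d s.

Lemma Inv_iterP (a : R) cap d x y n : 0 < a -> Inv a d x y ->
  (x + n)%:R <= ee a cap -> Inv a (iter n (stepk (@WP a cap)) d) (x + n) y.
Proof.
move=> Ha Hi; elim: n => [|n IH] H; first by rewrite addn0.
rewrite /= addnS; apply: Inv_stepP => //; last by rewrite -addnS.
apply: IH; apply: le_trans H; by rewrite ler_nat leq_add2l.
Qed.

Lemma Inv_iterN (a : R) cap d x y n : 0 < a -> Inv a d x y ->
  (y + n)%:R <= ee a cap -> Inv a (iter n (stepk (@WN a cap)) d) x (y + n).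
Proof.
move=> Ha Hi; elim: n => [|n IH] H; first by rewrite addn0.
rewrite /= addnS; apply: Inv_stepN => //; last by rewrite -addnS.
apply: IH; apply: le_trans H; by rewrite ler_nat leq_add2l.
Qed.

Lemma Inv_run (a : R) cap n0 (s : seq (update n0)) : 0 < a -> forall d x y,
  Inv a d x y -> (x + Ptot s)%:R <= ee a cap -> (y + Ntot s)%:R <= ee a cap ->
  Inv a (runS a cap d s) (x + Ptot s) (y + Ntot s).
Proof.
move=> Ha; elim: s => [|u s IH] d x y Hi HP HN /=.
  by move: Hi; rewrite /Ptot /Ntot !big_nil !addn0.
move: HP HN; rewrite /Ptot /Ntot !big_cons !addnA => HP HN.
apply: IH => //.
have Hmono : forall p q r : nat, (p + q + r)%:R <= ee a cap -> (p + q)%:R <= ee a cap.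
  move=> p q r H; apply: le_trans H; by rewrite ler_nat leq_addr.
move: HP HN; rewrite /Kern /posu /negu; case: ifP => Hpos HP HN.
  rewrite step_Pow !addn0; apply: Inv_iterP => //; exact: Hmono HP.
rewrite step_Pow !addn0; apply: Inv_iterN => //; exact: Hmono HN.
Qed.

Lemma cheb (S : finType) (d Y : S -> R) (c B : R) :
  (forall t, 0 <= d t) -> (forall t, 0 <= Y t) -> 0 <= c -> 0 <= B ->
  Ex d Y <= B * c -> \sum_(t | c < Y t) d t <= B.
Proof.
move=> Hd HY Hc HB HE.
have [c0|cpos] := eqVneq c 0.
  move: HE; rewrite c0 mulr0 => HE.
  have Hz : forall t, d t * Y t = 0.
    move=> t; apply/eqP; move: t; apply/forallP.
    have := @psumr_eq0P R S predT (fun t => d t * Y t).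
    move=> H. apply/forallP => t; apply/eqP; apply: H => //.
      move=> i _; exact: mulr_ge0.
    apply/eqP; rewrite eq_le HE /=; apply: sumr_ge0 => i _; exact: mulr_ge0.
  rewrite big1 // => t Ht.
  have := Hz t; move/eqP; rewrite mulf_eq0 => /orP [/eqP //|/eqP H].
  by move: Ht; rewrite H ltxx.
have Hcp : 0 < c by rewrite lt_def cpos Hc.
apply: (@le_trans _ _ (\sum_(t | c < Y t) d t * Y t / c)).
  apply: ler_sum => t Ht; rewrite -mulrA ler_peMr //.
    by rewrite ler_pdivlMr // mul1r ltW.
apply: (@le_trans _ _ (\sum_t d t * Y t / c)).
  rewrite [X in _ <= X](bigID (fun t => c < Y t)) /= lerDl.
  apply: sumr_ge0 => t _; apply: divr_ge0 => //; exact: mulr_ge0.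
rewrite -mulr_suml ler_pdivrMr //.
Qed.

Lemma success_S (a : R) cap (d : St cap -> R) (P N : nat) (e' eps L delta : R) :
  0 < a -> 0 < e' -> Inv a d P N -> L = P%:R - N%:R ->
  e' * (P%:R + N%:R) <= eps * L -> 2 * a <= e' ^+ 2 * delta ->
  1 - delta <= \sum_(t | ((1 - eps) * L <= eP a t - eN a t)
                          && (eP a t - eN a t <= (1 + eps) * L)) d t.
Proof.
move=> Ha He [Hd Hm Hv HmN HvN] HL Herr Hdel.
have [Hd0 Hd1] := Hd.
have HP0 : 0 <= P%:R :> R by rewrite ler0n.
have HN0 : 0 <= N%:R :> R by rewrite ler0n.
have He2 : 0 < e' ^+ 2 by rewrite exprn_gt0.
set B := a / e' ^+ 2.
have HB : 0 <= B by rewrite /B divr_ge0 // ltW.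
have HBd : 2 * B <= delta.
  by rewrite /B mulrA ler_pdivrMr // [delta * _]mulrC.
have cP : \sum_(t | (e' * P%:R) ^+ 2 < (eP a t - P%:R) ^+ 2) d t <= B.
  apply: cheb => //; first by move=> t; exact: sqr_ge0.
    exact: sqr_ge0.
  rewrite /B exprMn mulrA divfK //; last by rewrite gt_eqF.
have cN : \sum_(t | (e' * N%:R) ^+ 2 < (eN a t - N%:R) ^+ 2) d t <= B.
  apply: cheb => //; first by move=> t; exact: sqr_ge0.
    exact: sqr_ge0.
  rewrite /B exprMn mulrA divfK //; last by rewrite gt_eqF.
pose good (t : St cap) := ((1 - eps) * L <= eP a t - eN a t)
                          && (eP a t - eN a t <= (1 + eps) * L).
have -> : \sum_(t | ((1 - eps) * L <= eP a t - eN a t)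
                          && (eP a t - eN a t <= (1 + eps) * L)) d t =
          \sum_(t | good t) d t by [].
have Hsplit : \sum_t d t = \sum_(t | good t) d t + \sum_(t | ~~ good t) d t.
  by rewrite (bigID good) /=.
rewrite Hd1 in Hsplit.
have Hbad : \sum_(t | ~~ good t) d t <=
   \sum_(t | (e' * P%:R) ^+ 2 < (eP a t - P%:R) ^+ 2) d t +
   \sum_(t | (e' * N%:R) ^+ 2 < (eN a t - N%:R) ^+ 2) d t.
  rewrite !(big_mkcond (fun t => ~~ good t)) !(big_mkcond (fun t => _ < _)) -big_split /=.
  apply: ler_sum => t _.
  have Ht0 := Hd0 t.
  case: ifP => Hg; last by case: ifP => _; case: ifP => _; lra.
  case: ifP => H1; case: ifP => H2; try lra.
  exfalso; move: Hg; rewrite /good.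
  move/negbT: H1; move/negbT: H2; rewrite -!leNgt => H2 H1.
  set u := eP a t - P%:R in H1; set v := eN a t - N%:R in H2.
  have Hu : u <= e' * P%:R /\ - u <= e' * P%:R.
    have Hp : 0 <= e' * P%:R by rewrite mulr_ge0 // ltW.
    split; nra.
  have Hv' : v <= e' * N%:R /\ - v <= e' * N%:R.
    have Hp : 0 <= e' * N%:R by rewrite mulr_ge0 // ltW.
    split; nra.
  have -> : eP a t - eN a t = L + (u - v) by rewrite /u /v HL; ring.
  case: Hu => Hu1 Hu2; case: Hv' => Hv1 Hv2.
  apply/negP; rewrite negbK; apply/andP; split; nra.
move: Hsplit; lra.
Qed.

Lemma ln_mono (x y : R) : 0 < x -> x <= y -> ln x <= ln y.
Proof.
move=> Hx; rewrite le_eqVlt => /orP [/eqP -> //|Hxy].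
apply/RleP; apply: Rlt_le; apply: ln_increasing; exact/RltP.
Qed.

Lemma ln2_gt0 : 0 < ln 2.
Proof.
have H : Rlt (ln 1) (ln 2) by apply: ln_increasing; [apply: Rlt_0_1 | apply: Rlt_plus_1].
rewrite ln_1 in H; exact/RltP.
Qed.

Lemma log2E (x : R) : log2 x = ln x / ln 2.
Proof. by rewrite /log2 RdivE. Qed.

Lemma log2_le (x y : R) : 0 < x -> x <= y -> log2 x <= log2 y.
Proof.
move=> Hx Hxy; rewrite !log2E ler_pM2r ?invr_gt0 ?ln2_gt0 //; exact: ln_mono.
Qed.

Lemma log2_ge0 (x : R) : 1 <= x -> 0 <= log2 x.
Proof.
move=> Hx; have := @log2_le 1 x ltr01 Hx.
by rewrite log2E ln_1 mul0r.
Qed.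

Lemma log2_mul (x y z : R) : 0 < x -> 0 < y -> z = x * y ->
  log2 z = log2 x + log2 y.
Proof.
move=> Hx Hy ->; rewrite !log2E -mulrDl; congr (_ * _).
rewrite -RmultE ln_mult //; exact/RltP.
Qed.

Lemma R2E : IZR 2 = 2%:R.
Proof. by rewrite IZRposE INRE. Qed.

Lemma log2E' (x : R) : log2 x = ln x / ln 2%:R.
Proof. by rewrite /log2 RdivE R2E. Qed.

Lemma log2_2 : log2 2%:R = 1.
Proof. rewrite -R2E. rewrite log2E divff //; have := ln2_gt0; rewrite lt0r; by case/andP. Qed.

Lemma log2_pow2 (z : R) j : z = 2 ^+ j -> log2 z = j%:R.
Proof.
move=> ->; elim: j => [|j IH]; first by rewrite expr0 log2E ln_1 mul0r.
rewrite exprS (@log2_mul 2%:R (2 ^+ j)) ?exprn_gt0 // IH log2_2.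
by rewrite -addn1 natrD addrC.
Qed.

Lemma sum_cond n0 (s : seq (update n0)) (p : pred (update n0)) (g : update n0 -> int) :
  \sum_(i < n0) \sum_(u <- s | (u.1 == i) && p u) g u = \sum_(u <- s | p u) g u.
Proof.
elim: s => [|u s IH]; first by rewrite big_nil big1 // => i _; rewrite big_nil.
under eq_bigr do rewrite big_cons.
rewrite big_cons; case Hp: (p u); last first.
  by under eq_bigr do rewrite andbF; rewrite IH.
under eq_bigr do rewrite andbT.
transitivity (\sum_(i < n0) ((if u.1 == i then g u else 0) +
   \sum_(j <- s | (j.1 == i) && p j) g j)).
  by apply: eq_bigr => i _; case: ifP; rewrite ?add0r.
rewrite big_split /= IH; congr (_ + _).
rewrite -big_mkcond /= (big_pred1 u.1) // => i /=; by rewrite eq_sym.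
Qed.

Lemma sum_freq n0 (s : seq (update n0)) : \sum_i freq s i = \sum_(u <- s) u.2.
Proof.
transitivity (\sum_(i < n0) \sum_(u <- s | (u.1 == i) && predT u) u.2).
  apply: eq_bigr => i _; rewrite /freq; apply: eq_bigl => u; by rewrite andbT.
by rewrite sum_cond.
Qed.

Lemma sum_u2 n0 (s : seq (update n0)) :
  \sum_(u <- s) u.2 = (Ptot s)%:Z - (Ntot s)%:Z.
Proof.
rewrite /Ptot /Ntot; elim: s => [|u s IH]; first by rewrite !big_nil.
rewrite !big_cons IH /posu /negu !PoszD.
case: ifP => H.
  rewrite gtz0_abs //; ring.
have H' : u.2 <= 0 by rewrite leNgt H.
rewrite lez0_abs //; ring.
Qed.

Lemma sum_ins n0 (s : seq (update n0)) : \sum_i insv s i = (Ptot s)%:Z.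
Proof.
rewrite /insv sum_cond /Ptot; elim: s => [|u s IH]; first by rewrite !big_nil.
rewrite !big_cons IH /posu PoszD; case: ifP => H //.
by rewrite gtz0_abs.
Qed.

Lemma sum_del n0 (s : seq (update n0)) : \sum_i delv s i = (Ntot s)%:Z.
Proof.
transitivity (\sum_(i < n0) \sum_(u <- s | (u.1 == i) && (u.2 < 0)) (- u.2)).
  apply: eq_bigr => i _; rewrite /delv ler0_norm.
    by rewrite sumrN.
  apply: sumr_le0 => u /andP [_ H]; exact: ltW.
rewrite sum_cond /Ntot; elim: s => [|u s IH]; first by rewrite !big_nil.
rewrite !big_cons IH /negu PoszD; case: ifP => H.
  have -> : (0 < u.2) = false by apply/negbTE; rewrite -leNgt ltW.
  by rewrite ltz0_abs.
case: ifP => H2 //.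
have -> : u.2 = 0 by apply/eqP; rewrite eq_le leNgt H2 leNgt H.
by rewrite add0r.
Qed.

Lemma tot_bound n0 (s : seq (update n0)) (M : nat) :
  (forall u, u \in s -> (`|u.2| <= M)%N) -> (Ptot s + Ntot s <= size s * M)%N.
Proof.
rewrite /Ptot /Ntot -big_split /= => H.
apply: (@leq_trans (\sum_(u <- s) M)).
  rewrite big_seq [X in (_ <= X)%N]big_seq; apply: leq_sum => u Hu.
  rewrite /posu /negu; case: ifP => _; rewrite ?addn0 ?add0n. 1,2: exact: (H u Hu).
by rewrite big_const_seq count_predT iter_addn_0 mulnC.
Qed.

Lemma intr_sum n0 (F : 'I_n0 -> int) :
  \sum_i (F i)%:~R = (\sum_i F i)%:~R :> R.
Proof. by rewrite (big_morph (fun z : int => z%:~R : R) (@intrD R) (mulr0z 1)). Qed.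

Lemma L_eq n0 (s : seq (update n0)) : strict_turnstile s ->
  l1norm (freq s) = (Ptot s)%:R - (Ntot s)%:R.
Proof.
move=> Hst; rewrite /l1norm.
transitivity (\sum_i (freq s i)%:~R : R).
  apply: eq_bigr => i _; rewrite ger0_norm //.
  by have := Hst (size s) i; rewrite take_size.
by rewrite intr_sum sum_freq sum_u2 intrB !pmulrn.
Qed.

Lemma T_eq n0 (s : seq (update n0)) :
  l1norm (fun i => insv s i + delv s i) = (Ptot s)%:R + (Ntot s)%:R.
Proof.
rewrite /l1norm.
transitivity (\sum_i (insv s i + delv s i)%:~R : R).
  apply: eq_bigr => i _; rewrite ger0_norm //; apply: addr_ge0.
    by apply: sumr_ge0 => u /andP [_ H]; exact: ltW.
  by rewrite /delv normr_ge0.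
by rewrite intr_sum big_split /= sum_ins sum_del intrD !pmulrn.
Qed.

Lemma sum_enc (S : finType) (P : pred S) (F : S -> R) :
  \sum_(i < #|{: S}| | P (enum_val i)) F (enum_val i) = \sum_(x | P x) F x.
Proof.
rewrite -(big_enum_val_cond (A := predT)).
by apply: eq_bigl => x.
Qed.

Lemma sum_enc1 (S : finType) (F : S -> R) :
  \sum_(i < #|{: S}|) F (enum_val i) = \sum_x F x.
Proof. exact: (sum_enc predT F). Qed.

Lemma bern (x : R) n : 0 <= x -> 1 + n%:R * x <= (1 + x) ^+ n.
Proof.
move=> Hx; elim: n => [|n IH]; first by rewrite mul0r addr0 expr0.
rewrite exprS -addn1 natrD.
have H1 : 0 <= (1 + x) ^+ n by apply: exprn_ge0; lra.
have H2 : 0 <= n%:R * x by apply: mulr_ge0 => //; rewrite ler0n.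
nra.
Qed.


Lemma nat_fact n K l : (0 < n)%N -> (n < 2 ^ l)%N -> (n ^ K + 1 <= 2 ^ (K.+1 * l))%N.
Proof.
move=> Hn Hl; rewrite mulnC expnM expnS.
have h1 : (n ^ K <= (2 ^ l) ^ K)%N.
  elim: K => [|K IH] //; rewrite !expnS; apply: leq_mul => //; exact: ltnW.
have h3 : (2 <= 2 ^ l)%N by lia.
have h2 : (1 <= n ^ K)%N by rewrite expn_gt0 Hn.
nia.
Qed.

Lemma ee_cap (r K l n : nat) : (0 < r)%N -> (0 < n)%N -> (n < 2 ^ l)%N ->
  (n ^ K)%:R <= ee (r%:R^-1) (r * K.+1 * l).
Proof.
move=> Hr Hn Hl.
have Hr' : 0 < r%:R :> R by rewrite ltr0n.
set a := r%:R^-1.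
have Ha : 0 < a by rewrite invr_gt0.
have H2 : 2 <= (1 + a) ^+ r.
  have := bern r (ltW Ha); rewrite /a mulfV ?gt_eqF //.
have H3 : 2 ^+ (K.+1 * l) <= (1 + a) ^+ (r * K.+1 * l).
  rewrite -mulnA [in X in _ <= X]exprM; apply: (@lerXn2r R (K.+1 * l) 2 ((1 + a) ^+ r)); rewrite ?nnegrE //; lra.
have H4 : (n ^ K)%:R + 1 <= 2 ^+ (K.+1 * l) :> R.
  rewrite -natrX -[1]/(1%:R) -natrD ler_nat; exact: nat_fact.
have H5 : 1 <= (1 + a) ^+ (r * K.+1 * l) by apply: exprn_ege1; lra.
rewrite /ee ler_pdivlMr //.
have Ha1 : a <= 1 by rewrite /a invf_le1 // ler1n.
have Hx : 0 <= (n ^ K)%:R :> R by rewrite ler0n.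
nra.
Qed.

Lemma tl_le n : (1 < n)%N -> (trunc_log 2 n)%:R <= log2 n%:R.
Proof.
move=> Hn.
have H := @trunc_logP 2 n isT (ltnW Hn).
rewrite -(@log2_pow2 ((2 ^ trunc_log 2 n)%N%:R) (trunc_log 2 n)); last by rewrite natrX.
apply: log2_le; first by rewrite ltr0n expn_gt0.
by rewrite ler_nat.
Qed.

Lemma log_main (K n r : nat) (eps delta alpha : R) :
  (1 < n)%N -> 0 < eps < 1 -> 0 < delta < 1 -> 1 <= alpha -> (0 < r)%N ->
  r%:R <= 4 * (alpha / eps) ^+ 2 * (1 / delta) ->
  log2 (((r * K.+1 * (trunc_log 2 n).+1).+1 * (r * K.+1 * (trunc_log 2 n).+1).+1)%N%:R)
  <= (4 + 2 * log2 (16 * K.+1)%N%:R) *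
     (log2 (alpha / eps) + log2 (1 / delta) + log2 (log2 n%:R) + 1).
Proof.
move=> Hn /andP [He0 He1] /andP [Hd0 Hd1] Ha Hr Hrb.
rewrite !RdivE R1E.
set X := alpha / eps. set Y := 1 / delta. set Z := log2 n%:R.
set tl := trunc_log 2 n. set cap := (r * K.+1 * tl.+1)%N.
have HX : 1 <= X by rewrite /X ler_pdivlMr // mul1r; lra.
have HY : 1 <= Y by rewrite /Y ler_pdivlMr // mul1r; lra.
have Htl : (1 <= tl)%N by rewrite /tl trunc_log_gt0.
have HtlZ : tl%:R <= Z by exact: tl_le.
have Htl1 : 1 <= tl%:R :> R by rewrite ler1n.
have HZ : 1 <= Z by lra.
have HK : 1 <= K.+1%:R :> R by rewrite ler1n.
have Hr1 : 1 <= r%:R :> R by rewrite ler1n.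
set B := (16 * K.+1)%N%:R * X * X * Y * Z.
have Hc1 : cap.+1%:R <= B.
  have -> : cap.+1%:R = r%:R * K.+1%:R * (tl%:R + 1) + 1 :> R.
    rewrite /cap -[LHS]natr1 [in LHS]natrM [in LHS]natrM -[tl.+1%:R]natr1 //.
  rewrite /B natrM.
  have H1 : r%:R * K.+1%:R * (tl%:R + 1) + 1 <= 2 * (r%:R * K.+1%:R * (tl%:R + 1)) :> R.
    have HP : 1 <= r%:R * K.+1%:R * (tl%:R + 1) :> R.
      have := mulr_ge0 (ler0n R r) (ler0n R K.+1); nra.
    set P := r%:R * K.+1%:R * (tl%:R + 1) in HP *; lra.
  apply: le_trans H1 _.
  have H2 : tl%:R + 1 <= 2 * Z :> R by lra.
  have H3 : r%:R * K.+1%:R <= 4 * X ^+ 2 * Y * K.+1%:R :> R by rewrite ler_pM2r //; lra.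
  have H4 : 0 <= r%:R * K.+1%:R :> R by rewrite mulr_ge0 // ler0n.
  have H5 : r%:R * K.+1%:R * (tl%:R + 1) <= 4 * X ^+ 2 * Y * K.+1%:R * (2 * Z) :> R.
    apply: le_trans (ler_wpM2l H4 H2) _.
    rewrite ler_pM2r //; lra.
  rewrite expr2 in H5; nra.
have HB0 : 0 < cap.+1%:R :> R by rewrite ltr0n.
have Hlc : log2 cap.+1%:R <= log2 B by exact: log2_le.
have HXp : 0 < X by lra.
have HYp : 0 < Y by lra.
have HZp : 0 < Z by lra.
have H16 : 0 < (16 * K.+1)%N%:R :> R by rewrite ltr0n.
have HlB : log2 B = log2 (16 * K.+1)%N%:R + log2 X + log2 X + log2 Y + log2 Z.
  set c := (16 * K.+1)%N%:R in H16 *.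
  have p1 : 0 < c * X by rewrite mulr_gt0.
  have p2 : 0 < c * X * X by rewrite mulr_gt0.
  have p3 : 0 < c * X * X * Y by rewrite mulr_gt0.
  rewrite /B (@log2_mul (c * X * X * Y) Z) //.
  rewrite (@log2_mul (c * X * X) Y) //.
  rewrite (@log2_mul (c * X) X) //.
  by rewrite (@log2_mul c X).
rewrite (@log2_mul cap.+1%:R cap.+1%:R) //; last by rewrite natrM.
have c0 : 0 <= log2 (16 * K.+1)%N%:R by apply: log2_ge0; rewrite ler1n muln_gt0.
have lX : 0 <= log2 X by exact: log2_ge0.
have lY : 0 <= log2 Y by exact: log2_ge0.
have lZ : 0 <= log2 Z by exact: log2_ge0.
rewrite HlB in Hlc.
set c := log2 (16 * K.+1)%N%:R in c0 Hlc *.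
nra.
Qed.

Definition init0 cap : St cap -> R := fun t => (t == (ord0, ord0))%:R.

Lemma Ex_init cap (f : St cap -> R) : Ex (@init0 cap) f = f (ord0, ord0).
Proof.
rewrite /Ex (bigD1 (ord0, ord0)) //= /init0 eqxx mul1r big1 ?addr0 //.
by move=> t /negPf ->; rewrite mul0r.
Qed.

Lemma init_valid cap : dvalid (@init0 cap).
Proof.
split; first by move=> t; rewrite ler0n.
have := @Ex_init cap (fun _ => 1); rewrite /Ex /=. under eq_bigr do rewrite mulr1. done.
Qed.

Lemma ee0 (a : R) : ee a 0 = 0.
Proof. by rewrite /ee expr0 subrr mul0r. Qed.

Lemma Inv_init (a : R) cap : Inv a (@init0 cap) 0 0.
Proof.
split; rewrite ?Ex_init /eP /eN /= ?ee0 ?subrr ?expr0n /= ?mulr0 //.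
exact: init_valid.
Qed.

Lemma Kern_valid (a : R) cap n0 (u : update n0) : 0 < a -> kvalid (@Kern a cap n0 u).
Proof.
move=> Ha; rewrite /Kern; case: ifP => _; apply: kvalid_Pow.
  exact: WP_valid. exact: WN_valid.
Qed.

Lemma foldl_enc n0 (S : finType) (Kf : update n0 -> S -> S -> R) (s : seq (update n0)) :
  forall (d : 'I_#|{: S}| -> R) (dS : S -> R),
  (forall i, d i = dS (enum_val i)) ->
  forall i, foldl (fun d u => fun t => \sum_(r < #|{: S}|) d r * Kf u (enum_val r) (enum_val t)) d s i
          = foldl (fun d u => stepk (Kf u) d) dS s (enum_val i).
Proof.
elim: s => [|u s IH] d dS Hd i /=; first exact: Hd.
apply: IH => j; rewrite /stepk -(sum_enc1 (fun x => dS x * Kf u x (enum_val j))); apply: eq_bigr => r _; by rewrite Hd.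
Qed.

Unset Implicit Arguments.
Theorem theorem5p2 :
  forall K : nat, exists C : R, 0 < C /\
  forall (n : nat) (eps delta alpha : R),
    (2 <= n)%N -> 0 < eps < 1 -> 0 < delta < 1 -> 1 <= alpha ->
    exists (k : nat) (A : stream_alg n k),
      valid_alg A /\
      log2 k%:R <= C * (log2 (alpha / eps) + log2 (1 / delta) + log2 (log2 n%:R) + 1) /\
      forall (m M : nat) (s : seq (update n)),
        size s = m ->
        (forall u, u \in s -> (`|u.2| <= M)%N) ->
        (m * M <= n ^ K)%N ->
        strict_turnstile s ->
        L1_alpha_property alpha s ->
        1 - delta <= success_prob A eps s.
Proof.
move=> K.
exists (4 + 2 * log2 (16 * K.+1)%N%:R).
split.
  have : 0 <= log2 (16 * K.+1)%N%:R by apply: log2_ge0; rewrite ler1n muln_gt0.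
  lra.
move=> n eps delta alpha Hn Heps Hdel Ha.
case/andP: (Heps) => He0 He1. case/andP: (Hdel) => Hd0 Hd1.
pose Q := 2 * alpha ^+ 2 / (eps ^+ 2 * delta).
pose r := (Num.truncn Q).+1.
pose a : R := r%:R^-1.
pose cap := (r * K.+1 * (trunc_log 2 n).+1)%N.
have Hed : 0 < eps ^+ 2 * delta by rewrite mulr_gt0 // exprn_gt0.
have HQ1 : 1 <= Q.
  rewrite /Q ler_pdivlMr // mul1r.
  have : eps ^+ 2 <= 1 by rewrite expr_le1 //; lra.
  have : 1 <= alpha ^+ 2 by rewrite exprn_ege1.
  nra.
have HrQ : Q < r%:R by rewrite /r; apply: truncnS_gt.
have HrQ1 : r%:R <= Q + 1.
  rewrite /r -natr1 lerD2r; rewrite truncn_le; lra.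
have Hr0 : (0 < r)%N by [].
have Hrp : 0 < r%:R :> R by rewrite ltr0n.
have Ha0 : 0 < a by rewrite /a invr_gt0.
have Hrb : r%:R <= 4 * (alpha / eps) ^+ 2 * (1 / delta).
  have -> : 4 * (alpha / eps) ^+ 2 * (1 / delta) = 2 * Q.
    rewrite /Q; field; apply/andP; split; apply/eqP => H; lra.
  lra.
exists #|{: St cap}|.
exists (@StreamAlg n #|{: St cap}| (fun i => init0 (enum_val i))
          (fun u i j => @Kern a cap n u (enum_val i) (enum_val j))
          (fun i => eP a (enum_val i) - eN a (enum_val i))).
split.
  split.
    split; first by move=> i /=; rewrite ler0n.
    by rewrite /= (sum_enc1 (@init0 cap)); case: (init_valid cap).
  move=> u i; have [H0 H1] := @Kern_valid a cap n u Ha0 (enum_val i).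
  split; first by move=> j /=; apply: H0.
  by rewrite /= (sum_enc1 (fun x => @Kern a cap n u (enum_val i) x)).
split.
  rewrite card_prod card_ord.
  exact: log_main.
move=> m M s Hsz HM HmM Hst Hal.
set A := StreamAlg _ _ _.
have Hrun : forall i, run_distr A s i = runS a cap (@init0 cap) s (enum_val i).
  move=> i; rewrite /run_distr /runS.
  exact: (foldl_enc (fun u => @Kern a cap n u) s (d := fun i => init0 (enum_val i))).
pose L := l1norm (freq s).
have -> : success_prob A eps s =
  \sum_(x | ((1 - eps) * L <= eP a x - eN a x) && (eP a x - eN a x <= (1 + eps) * L))
     runS a cap (@init0 cap) s x.
  rewrite /success_prob /= -/L -(sum_enc (fun x => ((1 - eps) * L <= eP a x - eN a x) && (eP a x - eN a x <= (1 + eps) * L))).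
  apply: eq_bigr => i _; exact: Hrun.
have HPN : (Ptot s + Ntot s <= n ^ K)%N.
  apply: leq_trans HmM; rewrite -Hsz; exact: tot_bound.
have Hcap : (n ^ K)%:R <= ee a cap.
  apply: ee_cap => //; first by lia.
  exact: trunc_log_ltn.
have HInv : Inv a (runS a cap (@init0 cap) s) (Ptot s) (Ntot s).
  have := @Inv_run a cap n s Ha0 _ 0 0 (Inv_init a cap).
  rewrite !add0n; apply.
    apply: le_trans Hcap; rewrite ler_nat; apply: leq_trans HPN; exact: leq_addr.
  apply: le_trans Hcap; rewrite ler_nat; apply: leq_trans HPN; exact: leq_addl.
have HL : L = (Ptot s)%:R - (Ntot s)%:R by exact: L_eq.
have HT : (Ptot s)%:R + (Ntot s)%:R <= alpha * L.
  by rewrite -T_eq.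
have Hal0 : 0 < alpha by lra.
pose e1 := eps / alpha.
apply: (@success_S a cap _ (Ptot s) (Ntot s) e1 eps L delta) => //.
- by rewrite divr_gt0.
- rewrite /e1 -mulrA ler_pM2l // mulrC ler_pdivrMr // mulrC //.
- rewrite /e1.
  have -> : (eps / alpha) ^+ 2 * delta = 2 / Q.
    rewrite /Q; field; by rewrite (gt_eqF He0) (gt_eqF Hal0) (gt_eqF Hd0).
  rewrite /a ler_pM2l // lef_pV2 ?posrE //; [lra | lra].
Qed.
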